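(* Let $k$ be an algebraically closed field of characteristic $0$. Let $G$ be a finite group acting on an irreducible affine algebraic variety $X$, and let $Z$ be an irreducible affine algebraic variety (endowed with an action of an algebraic torus $T$ having an open orbit). Let $\pi_{X,G}\colon X\to X/\!\!/G$ be the categorical quotient. Then for every two morphisms $\psi_1,\psi_2\colon Z\to X$ the following are equivalent: (i) $\pi_{X,G}\circ\psi_1=\pi_{X,G}\circ\psi_2$; (ii) there is $g\in G$ such that $\psi_2=g\cdot\psi_1$.
   Context: $X/\!\!/G$ is the affine variety with coordinate ring $k[X]^G$ and $\pi_{X,G}$ is the morphism induced by the inclusion $k[X]^G\subseteq k[X]$. For a morphism $\psi\colon Z\to X$ and $g\in G$, the morphism $g\cdot\psi$ is defined by $(g\cdot\psi)(z)=g\cdot(\psi(z))$. *)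

(* Defs.v *)
From HB Require Import structures.
From mathcomp Require Import all_boot all_order all_algebra all_fingroup.
From mathcomp Require Import mpoly.
Set Implicit Arguments. Unset Strict Implicit. Unset Printing Implicit Defensive.
Import Order.TTheory GRing.Theory Num.Theory.
Local Open Scope ring_scope.

Section AffVar.
Variable k : closedFieldType.

Definition pt (n : nat) := 'I_n -> k.

Definition zclosed (n : nat) (X : pt n -> Prop) : Prop :=
  exists S : {mpoly k[n]} -> Prop,
    forall x, X x <-> (forall p, S p -> p.@[x] = 0).

Definition affine_variety (n : nat) (X : pt n -> Prop) : Prop := zclosed X.

Definition irreducible_var (n : nat) (X : pt n -> Prop) : Prop :=
  affine_variety X /\ (exists x, X x) /\
  forall C1 C2 : pt n -> Prop, zclosed C1 -> zclosed C2 ->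
    (forall x, X x -> C1 x \/ C2 x) ->
    (forall x, X x -> C1 x) \/ (forall x, X x -> C2 x).

Definition var_morphism (m n : nat) (Z : pt m -> Prop) (X : pt n -> Prop)
  (f : pt m -> pt n) : Prop :=
  (exists P : 'I_n -> {mpoly k[m]}, forall z, Z z -> forall i, f z i = (P i).@[z])
  /\ (forall z, Z z -> X (f z)).

Definition group_action (gT : finGroupType) (n : nat) (X : pt n -> Prop)
  (act : gT -> pt n -> pt n) : Prop :=
  (forall g, var_morphism X X (act g)) /\
  (forall x, X x -> act 1%g x = x) /\
  (forall g h x, X x -> act (g * h)%g x = act g (act h x)).

(* G-invariant regular functions (elements of k[X]^G, represented by polynomials) *)
Definition invariant_fun (gT : finGroupType) (n : nat) (X : pt n -> Prop)
  (act : gT -> pt n -> pt n) (p : {mpoly k[n]}) : Prop :=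
  forall g x, X x -> p.@[act g x] = p.@[x].

Definition ptcat (r m : nat) (t : pt r) (z : pt m) : pt (r + m) :=
  fun i => match split i with inl a => t a | inr b => z b end.

Definition torus_pt (r : nat) (t : pt r) : Prop := forall i, t i != 0.

(* action of the torus T = (k^x)^r on Z, given by a var_morphism T x Z -> Z
   (regular functions on T x Z are P(t,z) / (t_1...t_r)^N) *)
Definition torus_action (r m : nat) (Z : pt m -> Prop)
  (tau : pt r -> pt m -> pt m) : Prop :=
  (exists (N : nat) (P : 'I_m -> {mpoly k[r + m]}),
     forall t z, torus_pt t -> Z z -> forall i,
       tau t z i * (\prod_j t j) ^+ N = (P i).@[ptcat t z]) /\
  (forall t z, torus_pt t -> Z z -> Z (tau t z)) /\
  (forall z, Z z -> tau (fun _ => 1) z = z) /\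
  (forall t s z, torus_pt t -> torus_pt s -> Z z ->
     tau (fun i => t i * s i) z = tau t (tau s z)).

Definition has_open_orbit (r m : nat) (Z : pt m -> Prop)
  (tau : pt r -> pt m -> pt m) : Prop :=
  exists z0, Z z0 /\ exists C : pt m -> Prop, zclosed C /\
    forall z, (Z z /\ ~ C z) <-> (exists t, torus_pt t /\ z = tau t z0).

End AffVar.

(* Main.v *)
Require Import Defs.
From HB Require Import structures.
From mathcomp Require Import all_boot all_order all_algebra all_fingroup.
From mathcomp Require Import mpoly.
From Stdlib Require Import Classical ClassicalEpsilon FunctionalExtensionality.
Import Order.TTheory GRing.Theory Num.Theory.
Local Open Scope ring_scope.

Section Helpers.
Local Set Implicit Arguments.
Variable k : closedFieldType.

Definition compf (a b : nat) (P : 'I_a -> {mpoly k[b]}) (p : {mpoly k[a]})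
  : {mpoly k[b]} := p \mPo [tuple P i | i < a].

Lemma compfE a b (P : 'I_a -> {mpoly k[b]}) p v :
  (compf P p).@[v] = p.@[fun i => (P i).@[v]].
Proof.
rewrite /compf comp_mpoly_meval; apply: meval_eq => i.
by rewrite tnth_mktuple.
Qed.

Lemma zclosed_union n (C1 C2 : pt k n -> Prop) :
  zclosed C1 -> zclosed C2 -> zclosed (fun x => C1 x \/ C2 x).
Proof.
move=> [S1 H1] [S2 H2].
exists (fun p => exists p1 p2, S1 p1 /\ S2 p2 /\ p = p1 * p2) => x; split.
  move=> Hx p [p1 [p2 [s1 [s2 ->]]]]; rewrite mevalM.
  case: Hx => [/H1 h|/H2 h]; first by rewrite (h _ s1) mul0r.
  by rewrite (h _ s2) mulr0.
move=> H; case: (classic (C1 x)) => [c|nc]; first by left.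
right; apply/H2 => p2 s2.
have [p1 np1] : exists p1, ~ (S1 p1 -> p1.@[x] = 0).
  apply: not_all_ex_not => hh; apply: nc; exact/H1.
have s1 : S1 p1 by apply: NNPP => ns; apply: np1 => /ns.
have nz : p1.@[x] != 0 by apply/eqP => e; apply: np1.
have := H (p1 * p2) (ex_intro _ p1 (ex_intro _ p2 (conj s1 (conj s2 erefl)))).
by rewrite mevalM => /eqP; rewrite mulf_eq0 (negbTE nz) /= => /eqP.
Qed.

Lemma zclosed_empty n : zclosed (fun _ : pt k n => False).
Proof.
exists (fun p => p = 1) => x; split => // H.
by have := H 1 erefl; rewrite meval1 => /eqP; rewrite oner_eq0.
Qed.

Lemma zclosed_bigU n (I : eqType) (C : I -> pt k n -> Prop) (s : seq I) :
  (forall i, zclosed (C i)) -> zclosed (fun x => exists i, i \in s /\ C i x).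
Proof.
move=> HC; elim: s => [|a s IH].
  have [S HS] := zclosed_empty n; exists S => x; rewrite -HS.
  by split => // -[i []].
have [S HS] := zclosed_union (HC a) IH; exists S => x; rewrite -HS; split.
  move=> [i []]; rewrite inE => /orP [/eqP -> c|iin c]; first by left.
  by right; exists i.
case=> [c|[i [iin c]]]; first by exists a; rewrite inE eqxx.
by exists i; rewrite inE iin orbT.
Qed.

Lemma irr_cover m (Z : pt k m -> Prop) (I : eqType) (C : I -> pt k m -> Prop)
  (s : seq I) : irreducible_var Z -> (forall i, zclosed (C i)) ->
  (forall z, Z z -> exists i, i \in s /\ C i z) ->
  exists i, i \in s /\ forall z, Z z -> C i z.
Proof.
move=> [_ [[z0 Zz0] Hirr]] HC; elim: s => [|a s IH] Hcov.
  by have [i []] := Hcov _ Zz0.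
have := Hirr (C a) _ (HC a) (@zclosed_bigU _ _ _ s HC).
case.
- move=> z Zz; have [i []] := Hcov _ Zz; rewrite inE => /orP [/eqP -> c|iin c].
    by left.
  by right; exists i.
- by move=> h; exists a; rewrite inE eqxx.
- move=> h; have [i [iin c]] := IH h; exists i; split => //.
  by rewrite inE iin orbT.
Qed.

End Helpers.

Theorem lemma2p9 (k : closedFieldType) (Hchar : [pchar k] =i pred0)
  (gT : finGroupType) (n : nat) (X : pt k n -> Prop)
  (act : gT -> pt k n -> pt k n)
  (r m : nat) (Z : pt k m -> Prop) (tau : pt k r -> pt k m -> pt k m) :
  irreducible_var X -> group_action X act ->
  irreducible_var Z -> torus_action Z tau -> has_open_orbit Z tau ->
  forall psi1 psi2 : pt k m -> pt k n,
    var_morphism Z X psi1 -> var_morphism Z X psi2 ->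
    ((forall p : {mpoly k[n]}, invariant_fun X act p ->
        forall z, Z z -> p.@[psi1 z] = p.@[psi2 z])
     <-> (exists g : gT, forall z, Z z -> psi2 z = act g (psi1 z))).
Proof.
move=> _ [Hmor [Hact1 HactM]] HZ _ _ psi1 psi2 [[P1 HP1] X1] [[P2 HP2] X2].
pose Q g := proj1_sig (constructive_indefinite_description _ (proj1 (Hmor g))).
have HQ : forall g w, X w -> forall i, act g w i = (Q g i).@[w].
  by move=> g; exact: (proj2_sig (constructive_indefinite_description _ (proj1 (Hmor g)))).
split; last first.
  move=> [g Hg] p Hp z Zz; rewrite Hg //; apply: esym; exact: (Hp g _ (X1 z Zz)).
move=> Hinv.
have sep : forall x y, X x -> X y ->
    (forall p, invariant_fun X act p -> p.@[x] = p.@[y]) ->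
    exists g, y = act g x.
  move=> x y Xx Xy Hxy; apply: NNPP => Hno.
  have Hne : forall g, y <> act g x by move=> g e; apply: Hno; exists g.
  pose f (g : gT) : {mpoly k[n]} :=
    match [pick i | act g x i != y i] with
    | Some i => 1 - ('X_i - (y i)%:MP) * ((act g x i - y i)^-1)%:MP
    | None => 1 end.
  have fy : forall g, (f g).@[y] = 1.
    move=> g; rewrite /f; case: pickP => [i _|_]; last by rewrite meval1.
    by rewrite mevalB meval1 mevalM mevalB mevalXU mevalC subrr mul0r subr0.
  have fx : forall g, (f g).@[act g x] = 0.
    move=> g; rewrite /f; case: pickP => [i hi|h].
      rewrite mevalB meval1 mevalM mevalB mevalXU !mevalC mulfV ?subrr //.
      by rewrite subr_eq0.
    exfalso; apply: (Hne g); apply: functional_extensionality => i.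
    by have := h i => /negbFE /eqP.
  pose h : {mpoly k[n]} := 1 - \prod_g f g.
  have hy : h.@[y] = 0.
    by rewrite /h mevalB meval1 rmorph_prod big1 ?subrr // => g _; exact: fy.
  have hx : forall g, h.@[act g x] = 1.
    move=> g; rewrite /h mevalB meval1 rmorph_prod (bigD1 g) //= fx mul0r.
    by rewrite subr0.
  pose p : {mpoly k[n]} := \prod_g compf (Q g) h.
  have pE : forall w, X w -> p.@[w] = \prod_g h.@[act g w].
    move=> w Xw; rewrite /p (big_morph _ (@mevalM _ _ w) (meval1 w)); apply: eq_bigr => g _.
    by rewrite compfE; apply: meval_eq => i; rewrite HQ.
  have pinv : invariant_fun X act p.
    move=> g0 w Xw; rewrite !pE //; last exact: (proj2 (Hmor g0)).
    rewrite [RHS](reindex_inj (mulIg g0)) /=; apply: eq_bigr => g _.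
    by rewrite HactM.
  have := Hxy p pinv; rewrite !pE // big1 ?hx // (bigD1 1%g) //= Hact1 // hy.
  by rewrite mul0r => /eqP; rewrite oner_eq0.
pose C g z := forall i, (P2 i - compf P1 (Q g i)).@[z] = 0.
have CE : forall g z, Z z -> (C g z <-> psi2 z = act g (psi1 z)).
  move=> g z Zz; rewrite /C; split.
    move=> H; apply: functional_extensionality => i.
    rewrite (HQ g _ (X1 z Zz)) (HP2 z Zz); move/eqP: (H i); rewrite mevalB subr_eq0 compfE => /eqP ->.
    by apply: meval_eq => j; rewrite HP1.
  move=> e i; rewrite mevalB compfE -(HP2 z Zz) e (HQ g _ (X1 z Zz)).
  by apply/eqP; rewrite subr_eq0; apply/eqP; apply: meval_eq => j; rewrite HP1.
have Ccl : forall g, zclosed (C g).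
  move=> g; exists (fun p => exists i, p = P2 i - compf P1 (Q g i)) => z.
  split; first by move=> H p [i ->].
  by move=> H i; apply: H; exists i.
have cov : forall z, Z z -> exists g, g \in enum gT /\ C g z.
  move=> z Zz; have [g Hg] := sep _ _ (X1 z Zz) (X2 z Zz)
    (fun p Hp => Hinv p Hp z Zz).
  by exists g; rewrite mem_enum; split => //; apply/CE.
have [g [_ Hg]] := @irr_cover _ _ _ _ _ (enum gT) HZ Ccl cov.
by exists g => z Zz; apply/CE => //; apply: Hg.
Qed.
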